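(* Consider the single-armed lazy restless bandit described in the context. If $\rho_0<\rho_1$, $R_0<R_1$ and $\beta\in(0,1/3)$, then the bandit is indexable: for $\eta\in\mathbb{R}$ let $\mathcal{P}_\beta(\eta)=\{\pi\in[0,1]: V_S(\pi,\eta)\le V_{NS}(\pi,\eta)\}$; then $\mathcal{P}_\beta(\eta)$ increases monotonically from $\emptyset$ to $[0,1]$ as $\eta$ increases from $-\infty$ to $\infty$, i.e. $\mathcal{P}_\beta(\eta_1)\setminus\mathcal{P}_\beta(\eta_2)=\emptyset$ whenever $\eta_1\le\eta_2$.
   Context: Single-armed lazy restless bandit: an arm has a hidden state in $\{0,1\}$ evolving as a two-state Markov chain with transition probabilities $p_{i,j}$ ($i,j\in\{0,1\}$, $p_{i,0}+p_{i,1}=1$). Time is divided into sessions; during each session the chain makes exactly $K\ge1$ transitions ($K$ a fixed known integer). In each session the decision maker either plays the arm or does not. If played and the arm is in state $i$ at the start of the session, an ACK is received at the end with probability $\rho_i\in[0,1]$ and the expected reward is $R_i\in\mathbb{R}$; if not played, a subsidy $\eta\in\mathbb{R}$ is received and nothing is observed. Discount factor $\beta\in(0,1)$. The belief $\pi\in[0,1]$ is the probability that the arm is in state $0$. Define $R_S(\pi)=\pi R_0+(1-\pi)R_1$, $\rho(\pi)=\pi\rho_0+(1-\pi)\rho_1$, $\gamma_1(\pi)=\frac{(1-\pi)\rho_1p_{1,0}+\pi\rho_0p_{0,0}}{\rho_1(1-\pi)+\rho_0\pi}$, $\gamma_0(\pi)=\frac{(1-\pi)(1-\rho_1)p_{1,0}+\pi(1-\rho_0)p_{0,0}}{(1-\rho_1)(1-\pi)+(1-\rho_0)\pi}$,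 $\gamma_2(\pi)=(p_{0,0}-p_{1,0})^K\pi+p_{1,0}\sum_{j=0}^{K-1}(p_{0,0}-p_{1,0})^j$. For each $\eta$, the value functions $V_S(\cdot,\eta),V_{NS}(\cdot,\eta),V(\cdot,\eta)$ on $[0,1]$ are the unique bounded solution of $V_S(\pi,\eta)=R_S(\pi)+\beta\big(\rho(\pi)V(\gamma_1(\pi),\eta)+(1-\rho(\pi))V(\gamma_0(\pi),\eta)\big)$, $V_{NS}(\pi,\eta)=\eta+\beta V(\gamma_2(\pi),\eta)$, $V(\pi,\eta)=\max\{V_S(\pi,\eta),V_{NS}(\pi,\eta)\}$ (a term with zero coefficient is taken to be $0$). *)

(* Defs.v *)
From Stdlib Require Import Reals.
Open Scope R_scope.

(* Model parameters.  p00 = p_{0,0}, p10 = p_{1,0}; p_{0,1} = 1 - p00,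
   p_{1,1} = 1 - p10 are determined by the row-sum constraints. *)

Fixpoint geom (d : R) (K : nat) : R :=
  match K with
  | O => 0
  | S k => geom d k + d ^ k
  end.

Definition RS (R0 R1 pi : R) : R := pi * R0 + (1 - pi) * R1.
Definition rho (rho0 rho1 pi : R) : R := pi * rho0 + (1 - pi) * rho1.

Definition gamma1 (p00 p10 rho0 rho1 pi : R) : R :=
  ((1 - pi) * rho1 * p10 + pi * rho0 * p00) / (rho1 * (1 - pi) + rho0 * pi).

Definition gamma0 (p00 p10 rho0 rho1 pi : R) : R :=
  ((1 - pi) * (1 - rho1) * p10 + pi * (1 - rho0) * p00)
  / ((1 - rho1) * (1 - pi) + (1 - rho0) * pi).

Definition gamma2 (p00 p10 : R) (K : nat) (pi : R) : R :=
  (p00 - p10) ^ K * pi + p10 * geom (p00 - p10) K.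

(* Division by zero in gamma0/gamma1 only occurs
   when the corresponding coefficient (rho pi or 1 - rho pi) is 0, so the
   term vanishes, matching the convention "a term with zero coefficient
   is taken to be 0". *)
Definition is_value_solution (p00 p10 rho0 rho1 R0 R1 beta : R) (K : nat)
    (VS VNS V : R -> R -> R) : Prop :=
  (forall eta, exists M, forall pi, 0 <= pi <= 1 ->
      Rabs (VS pi eta) <= M /\ Rabs (VNS pi eta) <= M /\ Rabs (V pi eta) <= M) /\
  (forall eta pi, 0 <= pi <= 1 ->
      VS pi eta = RS R0 R1 pi
        + beta * (rho rho0 rho1 pi * V (gamma1 p00 p10 rho0 rho1 pi) eta
                  + (1 - rho rho0 rho1 pi) * V (gamma0 p00 p10 rho0 rho1 pi) eta)) /\
  (forall eta pi, 0 <= pi <= 1 ->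
      VNS pi eta = eta + beta * V (gamma2 p00 p10 K pi) eta) /\
  (forall eta pi, 0 <= pi <= 1 ->
      V pi eta = Rmax (VS pi eta) (VNS pi eta)).

Definition passive_set (VS VNS : R -> R -> R) (eta : R) (pi : R) : Prop :=
  0 <= pi <= 1 /\ VS pi eta <= VNS pi eta.

(* Main.v *)
Require Import Defs.
From Stdlib Require Import Reals Lra Psatz.
Open Scope R_scope.

Lemma frac_in a b : 0 <= a <= b -> 0 < b -> 0 <= a / b <= 1.
Proof.
  intros Ha Hb. unfold Rdiv.
  assert (0 < / b) by (apply Rinv_0_lt_compat; lra).
  assert (b * / b = 1) by (apply Rinv_r; lra).
  split; nra.
Qed.

Lemma abs_bnd x M : Rabs x <= M -> -M <= x <= M.
Proof. unfold Rabs; destruct (Rcase_abs x); lra. Qed.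

Lemma max_lo L a1 b1 a2 b2 : L <= a2 - a1 -> L <= b2 - b1 ->
  L <= Rmax a2 b2 - Rmax a1 b1.
Proof. unfold Rmax; destruct (Rle_dec a2 b2); destruct (Rle_dec a1 b1); lra. Qed.

Lemma max_hi U a1 b1 a2 b2 : a2 - a1 <= U -> b2 - b1 <= U ->
  Rmax a2 b2 - Rmax a1 b1 <= U.
Proof. unfold Rmax; destruct (Rle_dec a2 b2); destruct (Rle_dec a1 b1); lra. Qed.

Lemma weighted a L U x : 0 <= a -> (0 < a -> L <= x <= U) -> a * L <= a * x <= a * U.
Proof.
  intros Ha H. destruct (Rle_lt_or_eq_dec 0 a Ha) as [Hp|He].
  - specialize (H Hp). split; apply Rmult_le_compat_l; lra.
  - subst a. lra.
Qed.

Lemma lim_le beta B x c : 0 < beta < 1 -> 0 <= B ->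
  (forall n, x <= c + beta ^ n * B) -> x <= c.
Proof.
  intros Hb HB H. destruct (Rle_or_lt x c) as [|Hlt]; auto.
  exfalso.
  assert (He : 0 < (x - c) / (B + 1)) by (apply Rdiv_lt_0_compat; lra).
  assert (Ha : Rabs beta < 1) by (rewrite Rabs_right; lra).
  destruct (pow_lt_1_zero beta Ha _ He) as [N HN].
  specialize (HN N (le_n N)). specialize (H N).
  assert (0 <= beta ^ N) by (apply pow_le; lra).
  rewrite Rabs_right in HN by lra.
  assert (beta ^ N * (B + 1) < x - c).
  { apply (Rmult_lt_compat_r (B+1)) in HN; [|lra].
    unfold Rdiv in HN. rewrite Rmult_assoc, Rinv_l in HN by lra. lra. }
  nra.
Qed.

Lemma gamma2_in p00 p10 : 0 <= p00 <= 1 -> 0 <= p10 <= 1 ->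
  forall K pi, 0 <= pi <= 1 -> 0 <= gamma2 p00 p10 K pi <= 1.
Proof.
  intros H0 H1 K. induction K as [|K IH]; intros pi Hpi.
  - unfold gamma2; simpl; lra.
  - replace (gamma2 p00 p10 (S K) pi) with (gamma2 p00 p10 K (pi * p00 + (1 - pi) * p10)).
    + apply IH. nra.
    + unfold gamma2; simpl. ring.
Qed.

Lemma D_bounds p00 p10 rho0 rho1 R0 R1 beta K VS VNS V :
  0 <= p00 <= 1 -> 0 <= p10 <= 1 -> 0 <= rho0 <= 1 -> 0 <= rho1 <= 1 ->
  0 < beta < 1 ->
  is_value_solution p00 p10 rho0 rho1 R0 R1 beta K VS VNS V ->
  forall e1 e2, e1 <= e2 -> forall pi, 0 <= pi <= 1 ->
  0 <= V pi e2 - V pi e1 <= (e2 - e1) / (1 - beta).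
Proof.
  intros Hp0 Hp1 Hr0 Hr1 Hbeta [Hb [HS [HN HV]]] e1 e2 He.
  destruct (Hb e1) as [M1 HM1]; destruct (Hb e2) as [M2 HM2].
  assert (0 <= M1).
  { destruct (HM1 0 ltac:(lra)) as [_ [_ A]]. pose proof (Rabs_pos (V 0 e1)). lra. }
  assert (0 <= M2).
  { destruct (HM2 0 ltac:(lra)) as [_ [_ A]]. pose proof (Rabs_pos (V 0 e2)). lra. }
  set (B := M1 + M2).
  set (c := (e2 - e1) / (1 - beta)).
  assert (Hc0 : 0 <= c).
  { unfold c, Rdiv. apply Rmult_le_pos; [lra|]. left; apply Rinv_0_lt_compat; lra. }
  assert (Hcfix : (e2 - e1) + beta * c = c).
  { unfold c. field. lra. }
  assert (Hn : forall n pi, 0 <= pi <= 1 ->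
     -(beta ^ n * B) <= V pi e2 - V pi e1 <= c + beta ^ n * B).
  { induction n as [|n IHn]; intros pi Hpi.
    - destruct (HM1 pi Hpi) as [_ [_ A1]]; destruct (HM2 pi Hpi) as [_ [_ A2]].
      apply abs_bnd in A1; apply abs_bnd in A2. unfold B. simpl. lra.
    - assert (Hbn : 0 <= beta ^ n * B).
      { apply Rmult_le_pos; [apply pow_le; lra | unfold B; lra]. }
      set (L := -(beta ^ n * B)) in *.
      set (U := c + beta ^ n * B) in *.
      assert (HL : L <= 0) by (unfold L; lra).
      assert (HU : 0 <= U) by (unfold U; lra).
      rewrite (HV e2 pi Hpi), (HV e1 pi Hpi).
      rewrite (HS e2 pi Hpi), (HS e1 pi Hpi), (HN e2 pi Hpi), (HN e1 pi Hpi).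
      set (r := rho rho0 rho1 pi).
      assert (Hr : 0 <= r <= 1) by (unfold r, rho; nra).
      assert (HA : 0 <= pi * rho0) by nra.
      assert (HB' : 0 <= (1 - pi) * rho1) by nra.
      assert (HA' : 0 <= pi * (1 - rho0)) by nra.
      assert (HB'' : 0 <= (1 - pi) * (1 - rho1)) by nra.
      assert (G1 : 0 < r -> L <= V (gamma1 p00 p10 rho0 rho1 pi) e2
                              - V (gamma1 p00 p10 rho0 rho1 pi) e1 <= U).
      { intros Hrp. apply IHn. unfold gamma1. apply frac_in.
        - split; nra.
        - unfold r, rho in Hrp. lra. }
      assert (G0 : 0 < 1 - r -> L <= V (gamma0 p00 p10 rho0 rho1 pi) e2
                              - V (gamma0 p00 p10 rho0 rho1 pi) e1 <= U).
      { intros Hrp. apply IHn. unfold gamma0. apply frac_in.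
        - split; nra.
        - unfold r, rho in Hrp. lra. }
      assert (G2 : L <= V (gamma2 p00 p10 K pi) e2 - V (gamma2 p00 p10 K pi) e1 <= U).
      { apply IHn. apply gamma2_in; auto. }
      pose proof (weighted r L U _ ltac:(lra) G1) as W1.
      pose proof (weighted (1 - r) L U _ ltac:(lra) G0) as W0.
      set (d1 := V (gamma1 p00 p10 rho0 rho1 pi) e2 - V (gamma1 p00 p10 rho0 rho1 pi) e1) in *.
      set (d0 := V (gamma0 p00 p10 rho0 rho1 pi) e2 - V (gamma0 p00 p10 rho0 rho1 pi) e1) in *.
      set (d2 := V (gamma2 p00 p10 K pi) e2 - V (gamma2 p00 p10 K pi) e1) in *.
      assert (ES : (RS R0 R1 pi + beta * (r * V (gamma1 p00 p10 rho0 rho1 pi) e2 +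
                     (1 - r) * V (gamma0 p00 p10 rho0 rho1 pi) e2))
                  - (RS R0 R1 pi + beta * (r * V (gamma1 p00 p10 rho0 rho1 pi) e1 +
                     (1 - r) * V (gamma0 p00 p10 rho0 rho1 pi) e1))
                  = beta * (r * d1 + (1 - r) * d0)) by (unfold d1, d0; ring).
      assert (EN : (e2 + beta * V (gamma2 p00 p10 K pi) e2) - (e1 + beta * V (gamma2 p00 p10 K pi) e1)
                  = (e2 - e1) + beta * d2) by (unfold d2; ring).
      assert (Hsum : L <= r * d1 + (1 - r) * d0 <= U) by nra.
      assert (HLs : beta * L <= beta * (r * d1 + (1 - r) * d0) <= beta * U).
      { split; apply Rmult_le_compat_l; lra. }
      assert (HLn : beta * L <= beta * d2 <= beta * U).
      { split; apply Rmult_le_compat_l; lra. }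
      assert (EL : -(beta ^ S n * B) = beta * L) by (unfold L; simpl; ring).
      assert (EU : c + beta ^ S n * B = (e2 - e1) + beta * U) by (unfold U; simpl; lra).
      rewrite EL, EU. split.
      + apply max_lo; lra.
      + apply max_hi; lra. }
  intros pi Hpi. split.
  - assert (H' : - (V pi e2 - V pi e1) <= 0).
    { apply (lim_le beta B); [lra | unfold B; lra |].
      intro n. destruct (Hn n pi Hpi). lra. }
    lra.
  - apply (lim_le beta B); [lra | unfold B; lra |].
    intro n. destruct (Hn n pi Hpi). lra.
Qed.

Lemma G_mono p00 p10 rho0 rho1 R0 R1 beta K VS VNS V :
  0 <= p00 <= 1 -> 0 <= p10 <= 1 -> 0 <= rho0 <= 1 -> 0 <= rho1 <= 1 ->
  0 < beta < 1 ->
  is_value_solution p00 p10 rho0 rho1 R0 R1 beta K VS VNS V ->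
  forall e1 e2, e1 <= e2 -> forall pi, 0 <= pi <= 1 ->
  (e2 - e1) - beta * ((e2 - e1) / (1 - beta)) <=
  (VNS pi e2 - VS pi e2) - (VNS pi e1 - VS pi e1).
Proof.
  intros Hp0 Hp1 Hr0 Hr1 Hbeta Hsol e1 e2 He pi Hpi.
  pose proof (D_bounds _ _ _ _ _ _ _ _ _ _ _ Hp0 Hp1 Hr0 Hr1 Hbeta Hsol e1 e2 He) as HD.
  destruct Hsol as [_ [HS [HN _]]].
  rewrite (HS e2 pi Hpi), (HS e1 pi Hpi), (HN e2 pi Hpi), (HN e1 pi Hpi).
  set (c := (e2 - e1) / (1 - beta)) in *.
  set (r := rho rho0 rho1 pi).
  assert (Hr : 0 <= r <= 1) by (unfold r, rho; nra).
  assert (HA : 0 <= pi * rho0) by nra.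
  assert (HB' : 0 <= (1 - pi) * rho1) by nra.
  assert (HA' : 0 <= pi * (1 - rho0)) by nra.
  assert (HB'' : 0 <= (1 - pi) * (1 - rho1)) by nra.
  assert (G1 : 0 < r -> 0 <= V (gamma1 p00 p10 rho0 rho1 pi) e2
                          - V (gamma1 p00 p10 rho0 rho1 pi) e1 <= c).
  { intros Hrp. apply HD. unfold gamma1. apply frac_in.
    - split; nra.
    - unfold r, rho in Hrp. lra. }
  assert (G0 : 0 < 1 - r -> 0 <= V (gamma0 p00 p10 rho0 rho1 pi) e2
                          - V (gamma0 p00 p10 rho0 rho1 pi) e1 <= c).
  { intros Hrp. apply HD. unfold gamma0. apply frac_in.
    - split; nra.
    - unfold r, rho in Hrp. lra. }
  assert (G2 : 0 <= V (gamma2 p00 p10 K pi) e2 - V (gamma2 p00 p10 K pi) e1 <= c).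
  { apply HD. apply gamma2_in; auto. }
  pose proof (weighted r 0 c _ ltac:(lra) G1) as W1.
  pose proof (weighted (1 - r) 0 c _ ltac:(lra) G0) as W0.
  set (d1 := V (gamma1 p00 p10 rho0 rho1 pi) e2 - V (gamma1 p00 p10 rho0 rho1 pi) e1) in *.
  set (d0 := V (gamma0 p00 p10 rho0 rho1 pi) e2 - V (gamma0 p00 p10 rho0 rho1 pi) e1) in *.
  set (d2 := V (gamma2 p00 p10 K pi) e2 - V (gamma2 p00 p10 K pi) e1) in *.
  assert (Hsum : r * d1 + (1 - r) * d0 <= c) by nra.
  assert (H1 : beta * (r * d1 + (1 - r) * d0) <= beta * c) by (apply Rmult_le_compat_l; lra).
  assert (H2 : 0 <= beta * d2) by (apply Rmult_le_pos; lra).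
  unfold d1, d0, d2 in *. lra.
Qed.

Theorem theorem2 (p00 p10 rho0 rho1 R0 R1 beta : R) (K : nat)
    (VS VNS V : R -> R -> R) :
  0 <= p00 <= 1 -> 0 <= p10 <= 1 ->
  0 <= rho0 <= 1 -> 0 <= rho1 <= 1 ->
  (1 <= K)%nat ->
  0 < beta < 1 / 3 ->
  rho0 < rho1 -> R0 < R1 ->
  is_value_solution p00 p10 rho0 rho1 R0 R1 beta K VS VNS V ->
  (forall eta1 eta2, eta1 <= eta2 ->
     forall pi, passive_set VS VNS eta1 pi -> passive_set VS VNS eta2 pi) /\
  (exists eta0, forall eta, eta <= eta0 -> forall pi, ~ passive_set VS VNS eta pi) /\
  (exists eta0, forall eta, eta0 <= eta ->
     forall pi, 0 <= pi <= 1 -> passive_set VS VNS eta pi).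
Proof.
  intros Hp0 Hp1 Hr0 Hr1 _ Hb _ _ Hsol.
  assert (Hbeta : 0 < beta < 1) by lra.
  pose proof (G_mono _ _ _ _ _ _ _ _ _ _ _ Hp0 Hp1 Hr0 Hr1 Hbeta Hsol) as HG.
  set (k := (1 - 2 * beta) / (1 - beta)).
  assert (Hk : 0 < k) by (apply Rdiv_lt_0_compat; lra).
  assert (Hkk : forall d, d - beta * (d / (1 - beta)) = d * k).
  { intro d. unfold k. field. lra. }
  destruct Hsol as [Hbd _].
  destruct (Hbd 0) as [M0 HM0].
  assert (HM : forall pi, 0 <= pi <= 1 -> -(2*M0) <= VNS pi 0 - VS pi 0 <= 2 * M0).
  { intros pi Hpi. destruct (HM0 pi Hpi) as [A1 [A2 _]].
    apply abs_bnd in A1; apply abs_bnd in A2. lra. }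
  assert (0 <= M0).
  { destruct (HM0 0 ltac:(lra)) as [A _]. pose proof (Rabs_pos (VS 0 0)). lra. }
  split; [|split].
  - intros e1 e2 He pi [Hpi Hp]. split; auto.
    specialize (HG e1 e2 He pi Hpi). rewrite Hkk in HG.
    assert (0 <= (e2 - e1) * k) by (apply Rmult_le_pos; lra). lra.
  - exists (-(2 * M0 + 1) / k). intros eta Heta pi [Hpi Hp].
    assert (Hek : eta * k <= -(2 * M0 + 1)).
    { apply (Rmult_le_compat_r k) in Heta; [|lra].
      unfold Rdiv in Heta. rewrite Rmult_assoc, Rinv_l in Heta by lra. lra. }
    assert (Heta0 : eta <= 0).
    { destruct (Rle_or_lt eta 0); auto. nra. }
    specialize (HG eta 0 Heta0 pi Hpi). rewrite Hkk in HG.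
    specialize (HM pi Hpi). nra.
  - exists ((2 * M0 + 1) / k). intros eta Heta pi Hpi. split; auto.
    assert (Hek : 2 * M0 + 1 <= eta * k).
    { apply (Rmult_le_compat_r k) in Heta; [|lra].
      unfold Rdiv in Heta. rewrite Rmult_assoc, Rinv_l in Heta by lra. lra. }
    assert (Heta0 : 0 <= eta).
    { destruct (Rle_or_lt 0 eta); auto. nra. }
    specialize (HG 0 eta Heta0 pi Hpi). rewrite Hkk in HG.
    specialize (HM pi Hpi). nra.
Qed.
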